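(* Let $K$ be a field, $S=K[x_1,\ldots,x_n]$, $I\subset S$ a monomial ideal with $I\ne S$ and $G(I)=\{x^{a_1},\ldots,x^{a_m}\}$, let $T$ be a polynomial ring over $K$, and let $L_1,\ldots,L_m$ be arbitrary monomial ideals of $T$. Then the complex $\mathbb{F}^*$ of $L_1,\ldots,L_m$ induced by $I$ (defined in the context) is a well-defined complex of $T$-modules, and $H_0(\mathbb{F}^* )=T/L$ where $L=\sum_{j=1}^mL_j$.
   Context: For $a\in\mathbb{N}^n$, $x^a=x_1^{a(1)}\cdots x_n^{a(n)}$; $G(I)$ is the minimal monomial generating set. Let $0\to F_p\to\cdots\to F_1\to F_0\to S/I\to 0$ be the $\mathbb{Z}^n$-graded minimal free resolution of $S/I$ with differential $\partial$, where $F_0=S$ with basis $f_{01}$ of degree $0$, and $F_i=\bigoplus_{j=1}^{\beta_i}Sf_{ij}$ with $f_{ij}$ homogeneous of multidegree $a_{ij}\in\mathbb{N}^n$; here $\beta_1=m$, $a_{1j}=a_j$ and $\partial(f_{1j})=x^{a_j}f_{01}$. Write $\partial(f_{ij})=\sum_k\lambda^{(i)}_{kj}x^{a_{ij}-a_{i-1,k}}f_{i-1,k}$ with $\lambda^{(i)}_{kj}\in K$, where $\lambda^{(i)}_{kj}=0$ whenever $a_{ij}-a_{i-1,k}\notin\mathbb{N}^n$; the matrices $\lambda^{(i)}=(\lambda^{(i)}_{kj})\in K^{\beta_{i-1}\times\beta_i}$ are the scalar matrices ($\lambda^{(1)}=(1,\ldots,1)$). The complex $\mathbb{F}^*$ is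 defined by $F^*_0=T$, $F^*_i=\bigoplus_{j=1}^{\beta_i}L_{ij}$ for $1\le i\le p$, where $L_{1j}=L_j$ and, for $i\ge2$, $L_{ij}=\bigcap_{k:\lambda^{(i)}_{kj}\neq0}L_{i-1,k}$; the map $\partial^*:F^*_i\to F^*_{i-1}$ sends a column vector $u=(u_1,\ldots,u_{\beta_i})^T$, $u_j\in L_{ij}$, to $\lambda^{(i)}u$. *)

(* Defs.v *)
From HB Require Import structures.
From mathcomp Require Import all_boot all_algebra.
From mathcomp Require Import mpoly.
Set Implicit Arguments. Unset Strict Implicit. Unset Printing Implicit Defensive.
Import GRing.Theory.
Local Open Scope ring_scope.

Definition is_ideal (T : comNzRingType) (L : T -> Prop) : Prop :=
  [/\ L 0, (forall p q, L p -> L q -> L (p + q)) & (forall c p, L p -> L (c * p))].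

Definition monomial_ideal (K : fieldType) (r : nat) (L : {mpoly K[r]} -> Prop) : Prop :=
  is_ideal L /\
  forall p, L p -> exists s : seq ({mpoly K[r]} * 'X_{1..r}),
      (forall cm, cm \in s -> L 'X_[cm.2]) /\ p = \sum_(cm <- s) cm.1 * 'X_[cm.2].

Definition gen_ideal (K : fieldType) (n m : nat) (g : 'I_m -> 'X_{1..n})
    (f : {mpoly K[n]}) : Prop :=
  exists c : 'I_m -> {mpoly K[n]}, f = \sum_(j < m) c j * 'X_[g j].

Definition min_mon_gens (K : fieldType) (n m : nat) (I : {mpoly K[n]} -> Prop)
    (g : 'I_m -> 'X_{1..n}) : Prop :=
  (forall f, I f <-> gen_ideal g f) /\
  (forall j j' : 'I_m, j != j' -> ~~ lem (g j) (g j')).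

(* Matrix of the differential d_{i+1} : F_{i+1} -> F_i of a Z^n-graded free
   complex with basis multidegrees a i and scalar matrix lam i = lambda^(i+1):
   entry (k,j) is lambda_{kj} x^(a_{i+1,j} - a_{i,k}). *)
Definition resmx (K : fieldType) (n : nat) (beta : nat -> nat)
    (a : forall i, 'I_(beta i) -> 'X_{1..n})
    (lam : forall i, 'M[K]_(beta i, beta i.+1)) (i : nat)
    : 'M[{mpoly K[n]}]_(beta i, beta i.+1) :=
  \matrix_(k, j) ((lam i k j)%:MP * 'X_[(a i.+1 j - a i k)%MM]).

(* (beta, a, lam) is the Z^n-graded minimal free resolution
   0 -> F_p -> ... -> F_1 -> F_0 -> S/I -> 0, with F_i = S^(beta i),
   basis f_{ij} of multidegree a i j, and d(f_{i+1,j}) = sum_k lam i k j x^(..) f_{ik}. *)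
Definition is_min_graded_res (K : fieldType) (n : nat) (I : {mpoly K[n]} -> Prop)
    (p : nat) (beta : nat -> nat) (a : forall i, 'I_(beta i) -> 'X_{1..n})
    (lam : forall i, 'M[K]_(beta i, beta i.+1)) : Prop :=
  [/\ beta 0 = 1%N, (forall k, a 0%N k = 0%MM) & (forall i, (p < i)%N -> beta i = 0%N)] /\
  (* homogeneity: lambda_kj = 0 unless a_{i-1,k} <= a_{ij} *)
  (forall i k j, ~~ lem (a i k) (a i.+1 j) -> lam i k j = 0) /\
  (* minimality: the differentials have entries in (x_1,...,x_n) *)
  (forall i k j, lam i k j != 0 -> a i k != a i.+1 j) /\
  (* augmentation: F_1 -> F_0 = S -> S/I -> 0 exact *)
  (forall f, I f <-> exists v : 'cV_(beta 1%N),
               forall k, (resmx a lam 0 *m v) k 0 = f) /\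
  (forall i, resmx a lam i *m resmx a lam i.+1 = 0) /\
  (* exact at F_i, i >= 1 (including injectivity of d_p) *)
  (forall i (v : 'cV_(beta i.+1)), resmx a lam i *m v = 0 ->
      exists w : 'cV_(beta i.+2), v = resmx a lam i.+1 *m w).

(* The ideals L_{i+1,j} of T: L_{1j} = Lg j, and
   L_{i+2,j} = intersection of L_{i+1,k} over k with lambda^(i+2)_{kj} != 0. *)
Fixpoint Lc (K : fieldType) (r : nat) (beta : nat -> nat)
    (lam : forall i, 'M[K]_(beta i, beta i.+1))
    (Lg : 'I_(beta 1%N) -> {mpoly K[r]} -> Prop) (i : nat)
    : 'I_(beta i.+1) -> {mpoly K[r]} -> Prop :=
  match i return 'I_(beta i.+1) -> {mpoly K[r]} -> Prop with
  | 0 => Lg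
  | i'.+1 => fun j f => forall k : 'I_(beta i'.+1), lam i'.+1 k j != 0 ->
                          @Lc K r beta lam Lg i' k f
  end.

(* F*_i as a subset of T^(beta i): F*_0 = T, F*_i = (+)_j L_{ij}. *)
Definition Fstar (K : fieldType) (r : nat) (beta : nat -> nat)
    (lam : forall i, 'M[K]_(beta i, beta i.+1))
    (Lg : 'I_(beta 1%N) -> {mpoly K[r]} -> Prop) (i : nat)
    : 'cV[{mpoly K[r]}]_(beta i) -> Prop :=
  match i return 'cV[{mpoly K[r]}]_(beta i) -> Prop with
  | 0 => fun _ => True
  | i'.+1 => fun u => forall j, @Lc K r beta lam Lg i' j (u j 0)
  end.

Definition dstar (K : fieldType) (r : nat) (beta : nat -> nat)
    (lam : forall i, 'M[K]_(beta i, beta i.+1)) (i : nat)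
    (u : 'cV[{mpoly K[r]}]_(beta i.+1)) : 'cV[{mpoly K[r]}]_(beta i) :=
  map_mx (fun c : K => c%:MP) (lam i) *m u.

Definition sum_ideals (T : comNzRingType) (m : nat) (Lg : 'I_m -> T -> Prop) (f : T) : Prop :=
  exists h : 'I_m -> T, (forall j, Lg j (h j)) /\ f = \sum_(j < m) h j.

Arguments Fstar {K r beta} lam Lg i _.
Arguments dstar {K r beta} lam i u.
Arguments Lc {K r beta} lam Lg i _ _.

(* Main.v *)
Require Import Defs.
From HB Require Import structures.
From mathcomp Require Import all_boot all_algebra.
From mathcomp Require Import mpoly.
From mathcomp Require Import zify.
Import GRing.Theory.
Local Open Scope ring_scope.

Lemma mnm_sub3 (n : nat) (x y z : 'X_{1..n}) :
  (x <= y)%MM -> (y <= z)%MM -> ((y - x) + (z - y))%MM = (z - x)%MM.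
Proof.
move=> /mnm_lepP h1 /mnm_lepP h2; apply/mnmP=> i.
rewrite mnmDE !mnmBE; have := h1 i; have := h2 i; lia.
Qed.
Arguments mnm_sub3 {n x y z}.

Lemma Lc_ideal (K : fieldType) (r : nat) (beta : nat -> nat)
    (lam : forall i, 'M[K]_(beta i, beta i.+1))
    (Lg : 'I_(beta 1%N) -> {mpoly K[r]} -> Prop) :
  (forall j, is_ideal (Lg j)) ->
  forall i j, is_ideal (Lc lam Lg i j).
Proof.
move=> HL; elim=> [|i IH] j /=; first exact: HL.
split.
- by move=> k _; case: (IH k).
- by move=> p q Hp Hq k hk; case: (IH k) => _ H _; apply: H; [apply: Hp|apply: Hq].
- by move=> c p Hp k hk; case: (IH k) => _ _ H; apply: H; apply: Hp.
Qed.

Lemma ideal_sum (T : comNzRingType) (L : T -> Prop) (I : finType) (F : I -> T) :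
  is_ideal L -> (forall x, L (F x)) -> L (\sum_x F x).
Proof.
move=> [H0 HD HM] HF; elim/big_rec: _ => // x y _ Hy; exact: HD.
Qed.

Theorem lemma1p2 (K : fieldType) (n : nat) (I : {mpoly K[n]} -> Prop)
    (p : nat) (beta : nat -> nat) (a : forall i, 'I_(beta i) -> 'X_{1..n})
    (lam : forall i, 'M[K]_(beta i, beta i.+1))
    (r : nat) (Lg : 'I_(beta 1%N) -> {mpoly K[r]} -> Prop) :
  monomial_ideal I -> ~ I 1 ->
  min_mon_gens I (a 1%N) ->
  is_min_graded_res I p a lam ->
  (forall k j, lam 0%N k j = 1) ->
  (forall j, monomial_ideal (Lg j)) ->
  (* each F*_i is a T-submodule of T^(beta i) *)
      (forall i, Fstar lam Lg i 0 /\
         (forall u v, Fstar lam Lg i u -> Fstar lam Lg i v -> Fstar lam Lg i (u + v)) /\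
         (forall (c : {mpoly K[r]}) u, Fstar lam Lg i u -> Fstar lam Lg i (c *: u))) /\
      (* d* is well defined: it maps F*_{i+1} into F*_i *)
      (forall i u, Fstar lam Lg i.+1 u -> Fstar lam Lg i (dstar lam i u)) /\
      (* F* is a complex *)
      (forall i u, Fstar lam Lg i.+2 u -> dstar lam i (dstar lam i.+1 u) = 0) /\
      (* H_0 of Fstar = T / L: the image of d*_1 in F*_0 = T is L = sum_j L_j *)
      (forall f : {mpoly K[r]},
         (exists u, Fstar lam Lg 1%N u /\ forall k, (dstar lam 0 u) k 0 = f)
         <-> sum_ideals Lg f).
Proof.
move=> _ _ _ [[b0 _ _] [Hhom [_ [_ [Hcx _]]]]] H0 HLg.
have HLi : forall j, is_ideal (Lg j) by move=> j; case: (HLg j).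
have HLc := @Lc_ideal _ _ _ lam _ HLi.
split; [|split; [|split]].
- case=> [|i] //=; split; [|split].
  + by move=> j; rewrite mxE; case: (HLc i j).
  + by move=> u v Hu Hv j; rewrite mxE; case: (HLc i j) => _ H _; apply: H.
  + by move=> c u Hu j; rewrite mxE; case: (HLc i j) => _ _ H; apply: H.
- case=> [|i] u //= Hu j.
  rewrite /dstar mxE; apply: ideal_sum => // k.
  rewrite mxE; have [->|nz] := eqVneq (lam i.+1 j k) 0.
    by rewrite mul0r; case: (HLc i j).
  by case: (HLc i j) => _ _ H; apply: H; apply: Hu.
- move=> i u _; rewrite /dstar mulmxA.
  suff -> : map_mx (fun c : K => c%:MP) (lam i) *m map_mx (fun c : K => c%:MP) (lam i.+1)
            = 0 :> 'M[{mpoly K[r]}]_(_, _) by rewrite mul0mx.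
  apply/matrixP=> k l; rewrite !mxE.
  have E : (resmx a lam i *m resmx a lam i.+1) k l = 0 by rewrite Hcx mxE.
  move: E; rewrite /resmx mxE.
  under eq_bigr do rewrite !mxE.
  move=> E.
  under eq_bigr do rewrite !mxE.
  move: E.
  set m := (a i.+2 l - a i k)%MM.
  have Hterm : forall j, (lam i k j)%:MP * 'X_[(a i.+1 j - a i k)%MM] *
      ((lam i.+1 j l)%:MP * 'X_[(a i.+2 l - a i.+1 j)%MM])
      = (lam i k j * lam i.+1 j l)%:MP * 'X_[m] :> {mpoly K[n]}.
    move=> j.
    have [z1|nz1] := eqVneq (lam i k j) 0; first by rewrite z1 !(mul0r, mulr0, mpolyC0).
    have [z2|nz2] := eqVneq (lam i.+1 j l) 0; first by rewrite z2 !(mul0r, mulr0, mpolyC0).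
    have l1 : (a i k <= a i.+1 j)%MM by apply: contraNT nz1 => /Hhom ->; rewrite eqxx.
    have l2 : (a i.+1 j <= a i.+2 l)%MM by apply: contraNT nz2 => /Hhom ->; rewrite eqxx.
    rewrite mpolyCM /m -(mnm_sub3 l1 l2) mpolyXD.
    by rewrite mulrA -[X in X * _ = _]mulrA [_ * (_%:MP)]mulrC !mulrA.
  rewrite (eq_bigr _ (fun j _ => Hterm j)) -mulr_suml.
  rewrite -(big_morph _ (@mpolyCD _ _) (mpolyC0 _ _)) => E.
  have := congr1 (mcoeff m) E; rewrite mcoeffCM mcoeffX eqxx mulr1 mcoeff0 => Es.
  under eq_bigr do rewrite -mpolyCM.
  by rewrite -(big_morph _ (@mpolyCD _ _) (mpolyC0 _ _)) Es mpolyC0.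
- move=> f; split.
  + move=> [u [Hu Hf]].
    have k0 : 'I_(beta 0%N) by rewrite b0; exact: ord0.
    exists (fun j => u j 0); split => //.
    rewrite -(Hf k0) /dstar mxE; apply: eq_bigr => j _.
    by rewrite mxE H0 mpolyC1 mul1r.
  + move=> [h [Hh ->]]; exists (\col_j h j); split.
      by move=> j /=; rewrite mxE.
    move=> k; rewrite /dstar mxE; apply: eq_bigr => j _.
    by rewrite !mxE H0 mpolyC1 mul1r.
Qed.
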